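(* Let $\phi\in\mathrm{Homeo}(\overline{\mathbb D}^2,\partial\overline{\mathbb D}^2)$ preserve the coherent probability measures $\lambda_1,\dots,\lambda_n$ on $\overline{\mathbb D}^2$. Then the map $(\overline{\mathbb D}^2)^n\to\mathcal F_n$, $P_n\mapsto\beta(P_n;\phi)$ (defined on the set where $\beta(P_n;\phi)$ is defined), is measurable with respect to the product measure $\lambda_1\times\cdots\times\lambda_n$.
   Context: $\overline{\mathbb D}^2$ is the closed unit disk in $\mathbb R^2$, $\mathbb D^2$ its interior. Fix $n\ge1$ and distinct points $q_1,\dots,q_n\in\mathbb D^2$ equally spaced, in this order, on a diameter. The Artin braid group $B_n$ has generators $\sigma_1,\dots,\sigma_{n-1}$ with relations $\sigma_i\sigma_j=\sigma_j\sigma_i$ ($|i-j|\ge2$) and $\sigma_i\sigma_{i+1}\sigma_i=\sigma_{i+1}\sigma_i\sigma_{i+1}$; geometrically, $B_n$ is the set of equivalence classes (under continuous deformation through such objects) of geometrical braids, i.e. unions of $n$ arcs $\{(\gamma_i(t),t):t\in[0,1]\}\subset\mathbb D^2\times[0,1]$ with $\gamma_i(t)\ne\gamma_j(t)$ for $i\ne j$, joining $\{q_1,\dots,q_n\}\times\{0\}$ to $\{q_1,\dots,q_n\}\times\{1\}$, with product given by concatenation (the first factor below the second). The pure braid group $\mathcal F_n$ consists of classes with $\gamma_i(0)=\gamma_i(1)$ for all $i$. $\mathrm{Homeo}(\overline{\mathbb D}^2,\partial\overline{\mathbb D}^2)$ is the group of homeomorphisms of $\overline{\mathbb D}^2$ equal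 to the identity near the boundary. $\Omega^{2n}$ is the set of $(p_1,\dots,p_n)\in(\overline{\mathbb D}^2)^n$ such that for all $i\ne j$ and all $s\in[0,1]$, $(1-s)q_i+sp_i\ne(1-s)q_j+sp_j$. For $\phi\in\mathrm{Homeo}(\overline{\mathbb D}^2,\partial\overline{\mathbb D}^2)$ and $P_n=(p_1,\dots,p_n)$ with pairwise distinct $p_i\in\mathbb D^2$ such that both $P_n$ and $(\phi(p_1),\dots,\phi(p_n))$ lie in $\Omega^{2n}$, the braid $\beta(P_n;\phi)\in\mathcal F_n$ is defined (''$\beta(P_n;\phi)$ is defined'') as the class of the geometrical braid whose $i$-th strand is: the segment from $(q_i,0)$ to $(p_i,1/3)$, then the arc $(\phi_{3t-1}(p_i),t)$, $t\in[1/3,2/3]$, where $(\phi_\tau)_{\tau\in[0,1]}$ is any isotopy in $\mathrm{Homeo}(\overline{\mathbb D}^2,\partial\overline{\mathbb D}^2)$ from the identity to $\phi$, then the segment from $(\phi(p_i),2/3)$ to $(q_i,1)$; this class does not depend on the isotopy. An $n$-tuple $\lambda_1,\dots,\lambda_n$ of probability measures on $\overline{\mathbb D}^2$ is coherent if $\Omega^{2n}$ has full measure for $\lambda_1\times\cdots\times\lambda_n$. *)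

(* Defs.v *)
From HB Require Import structures.
From mathcomp Require Import all_boot all_order all_algebra.
From mathcomp Require Import all_classical all_reals all_analysis.
Set Implicit Arguments. Unset Strict Implicit. Unset Printing Implicit Defensive.
Import Order.TTheory GRing.Theory Num.Theory numFieldNormedType.Exports.
Local Open Scope classical_set_scope.
Local Open Scope ring_scope.

Notation pt R := (R * R)%type (only parsing).

Section BraidDefs.
Variable R : realType.

Definition sqn (x : (pt R)) : R := x.1 ^+ 2 + x.2 ^+ 2.
Definition cdisk : set (pt R) := [set x | sqn x <= 1].
Definition odisk : set (pt R) := [set x | sqn x < 1].
Definition I01 : set R := [set t | 0 <= t <= 1].

Definition lerp (s : R) (a b : (pt R)) : (pt R) :=
  ((1 - s) * a.1 + s * b.1, (1 - s) * a.2 + s * b.2).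

(* q_1,...,q_n : equally spaced, in this order, on the horizontal diameter;
   q_(i+1) = (2(i+1)/(n+1) - 1, 0) for i : 'I_n *)
Definition qpt (n : nat) (i : 'I_n) : (pt R) :=
  (2 * (i.+1)%:R / (n.+1)%:R - 1, 0).

(* Homeo(D^2, dD^2): a homeomorphism of the closed disk equal to the identity
   near the boundary, represented by its (unique) extension by the identity
   to the whole plane. *)
Definition homeoD (f : (pt R) -> (pt R)) : Prop :=
  [/\ continuous f,
      (exists g : (pt R) -> (pt R), [/\ continuous g, cancel f g & cancel g f]) &
      (exists r : R, 0 <= r < 1 /\ forall x, r < sqn x -> f x = x)].

Definition isotopy (Phi : R -> (pt R) -> (pt R)) (f : (pt R) -> (pt R)) : Prop :=
  [/\ (forall tau, I01 tau -> homeoD (Phi tau)),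
      (forall x, Phi 0 x = x),
      (forall x, Phi 1 x = f x) &
      {within [set tx : R * (pt R) | I01 tx.1 /\ cdisk tx.2],
         continuous (fun tx : R * (pt R) => Phi tx.1 tx.2)}].

(* geometric braids, strand i being t |-> (gamma i t, t), labelled so that
   strand i starts at q_i *)
Definition braidT (n : nat) := 'I_n -> R -> (pt R).

Definition geom_braid (n : nat) (g : braidT n) : Prop :=
  [/\ (forall i, {within I01, continuous (g i)}),
      (forall i t, I01 t -> odisk (g i t)),
      (forall i j t, I01 t -> i <> j -> g i t <> g j t),
      (forall i, g i 0 = qpt i) &
      (forall i, exists j : 'I_n, g i 1 = qpt j)].

Definition braid_equiv (n : nat) (g h : braidT n) : Prop :=
  exists H : R -> braidT n,
    [/\ (forall s, I01 s -> geom_braid (H s)),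
        (forall i t, I01 t -> H 0 i t = g i t),
        (forall i t, I01 t -> H 1 i t = h i t) &
        (forall i, {within [set st : R * R | I01 st.1 /\ I01 st.2],
                      continuous (fun st : R * R => H st.1 i st.2)})].

Definition beta_strand (n : nat) (P : 'I_n -> (pt R)) (f : (pt R) -> (pt R))
    (Phi : R -> (pt R) -> (pt R)) : braidT n :=
  fun i t =>
    if t <= 1 / 3 then lerp (3 * t) (qpt i) (P i)
    else if t <= 2 / 3 then Phi (3 * t - 1) (P i)
    else lerp (3 * t - 2) (f (P i)) (qpt i).

Definition in_beta (n : nat) (P : 'I_n -> (pt R)) (f : (pt R) -> (pt R)) (b : braidT n) :=
  exists Phi, isotopy Phi f /\ braid_equiv (beta_strand P f Phi) b.

Definition Omega (n : nat) : set ('I_n -> (pt R)) :=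
  [set P | (forall i, cdisk (P i)) /\
     forall i j s, i <> j -> I01 s ->
       lerp s (qpt i) (P i) <> lerp s (qpt j) (P j)].

Definition beta_dom (n : nat) (f : (pt R) -> (pt R)) : set ('I_n -> (pt R)) :=
  [set P | [/\ (forall i, odisk (P i)),
              (forall i j, i <> j -> P i <> P j),
              Omega P & Omega (f \o P)]].

(* product sigma-algebra on (R^2)^n, generated by measurable boxes *)
Definition boxes (n : nat) : set (set ('I_n -> (pt R))) :=
  [set B | exists A : 'I_n -> set (pt R),
     (forall i, measurable (A i)) /\ B = [set P | forall i, A i (P i)]].


Local Notation ptsn n := (g_sigma_algebraType (@boxes n)).

Definition is_prod_measure (n : nat) (lam : 'I_n -> probability (pt R) R)
    (mu : {measure set (ptsn n) -> \bar R}) : Prop :=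
  forall A : 'I_n -> set (pt R), (forall i, measurable (A i)) ->
    mu [set P | forall i, A i (P i)] = (\prod_(i < n) lam i (A i))%E.

Definition coherent (n : nat) (mu : {measure set (ptsn n) -> \bar R}) : Prop :=
  mu.-negligible (~` (@Omega n : set (ptsn n))).

(* measurability with respect to the (completion of the) measure mu *)
Definition cmeasurable (d : measure_display) (T : measurableType d)
    (mu : set T -> \bar R) (A : set T) : Prop :=
  exists B, measurable B /\ mu.-negligible ((A `\` B) `|` (B `\` A)).

End BraidDefs.

Notation ptsn R n := (g_sigma_algebraType (@boxes R n)).

(* Main.v *)
Require Import Defs.
From HB Require Import structures.
From mathcomp Require Import all_boot all_order all_algebra.
From mathcomp Require Import all_classical all_reals all_analysis.
From mathcomp Require Import measurable_realfun.
From mathcomp Require Import ring lra.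
Import Order.TTheory GRing.Theory Num.Theory numFieldNormedType.Exports.
Set Implicit Arguments. Unset Strict Implicit. Unset Printing Implicit Defensive.
Local Open Scope classical_set_scope.
Local Open Scope ring_scope.

Section Tools.
Variable R : realType.

Definition edc {T U : pseudoMetricType R} (A : set T) (f : T -> U) :=
  forall x, A x -> forall e, 0 < e ->
    exists2 d, 0 < d & forall y, A y -> ball x d y -> ball (f x) e (f y).

Lemma edcP {T U : pseudoMetricType R} (A : set T) (f : T -> U) :
  {within A, continuous f} <-> edc A f.
Proof.
split.
- move=> /subspace_continuousP cf x Ax e e0.
  have := cf x Ax (ball (f x) e) (nbhsx_ballx _ _ e0).
  rewrite /= /within /= => /nbhs_ballP [d d0 hd].
  exists d => // y Ay bxy; exact: (hd y bxy Ay).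
- move=> he; apply/subspace_continuousP => x Ax.
  apply/cvg_ballP => e e0.
  have [d d0 hd] := he x Ax e e0.
  rewrite /within /=; apply/nbhs_ballP; exists d => // y bxy Ay.
  exact: hd.
Qed.

Lemma edcT {T U : pseudoMetricType R} (A : set T) (f : T -> U) :
  continuous f -> edc A f.
Proof. by move=> cf; apply/edcP; apply: continuous_subspaceT. Qed.

Lemma edcW {T U : pseudoMetricType R} (A B : set T) (f : T -> U) :
  A `<=` B -> edc B f -> edc A f.
Proof.
move=> AB h x Ax e e0; have [d d0 hd] := h x (AB x Ax) e e0.
by exists d => // y Ay; apply: hd; apply: AB.
Qed.

Lemma edc_comp {T U V : pseudoMetricType R} (A : set T) (B : set U)
   (u : T -> U) (F : U -> V) :
  edc A u -> (forall x, A x -> B (u x)) -> edc B F -> edc A (F \o u).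
Proof.
move=> hu AB hF x Ax e e0.
have [d d0 hd] := hF (u x) (AB x Ax) e e0.
have [d' d'0 hd'] := hu x Ax d d0.
exists d' => // y Ay bxy /=; apply: hd; [exact: AB | exact: hd'].
Qed.

Lemma edc_glue {T U : pseudoMetricType R} (A : set T) (key : T -> R) (c : R)
   (f g : T -> U) :
  (forall x y d, ball x d y -> `|key x - key y| < d) ->
  edc (A `&` [set x | key x <= c]) f ->
  edc (A `&` [set x | c <= key x]) g ->
  (forall x, A x -> key x = c -> f x = g x) ->
  edc A (fun x => if key x <= c then f x else g x).
Proof.
move=> hk hf hg fg x Ax e e0.
have [xc|xc|xc] := ltgtP (key x) c.
- have [d d0 hd] := hf x (conj Ax (ltW xc)) e e0.
  exists (Num.min d (c - key x)); first by rewrite lt_min d0 subr_gt0.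
  move=> y Ay bxy.
  have b1 : ball x d y by apply: le_ball bxy; rewrite ge_min lexx.
  have b2 : `|key x - key y| < c - key x.
    by apply: (lt_le_trans (hk _ _ _ bxy)); rewrite ge_min lexx orbT.
  have yc : key y < c.
    have := ler_norm (key y - key x); rewrite distrC => h.
    have := le_lt_trans h b2; rewrite ltrBlDr subrK. by [].
  rewrite ?(ltW xc) ?(ltW yc); apply: hd => //; split => //; exact: ltW.
- have [d d0 hd] := hg x (conj Ax (ltW xc)) e e0.
  exists (Num.min d (key x - c)); first by rewrite lt_min d0 subr_gt0.
  move=> y Ay bxy.
  have b1 : ball x d y by apply: le_ball bxy; rewrite ge_min lexx.
  have b2 : `|key x - key y| < key x - c.
    by apply: (lt_le_trans (hk _ _ _ bxy)); rewrite ge_min lexx orbT.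
  have yc : c < key y.
    have := ler_norm (key x - key y) => h.
    have := le_lt_trans h b2. lra.
  rewrite ?(leNgt (key x)) ?xc /= ?(leNgt (key y)) ?yc /=; apply: hd => //; split => //; exact: ltW.
- have xc1 : key x <= c by rewrite xc.
  have xc2 : c <= key x by rewrite xc.
  have [d1 d10 hd1] := hf x (conj Ax xc1) e e0.
  have [d2 d20 hd2] := hg x (conj Ax xc2) e e0.
  exists (Num.min d1 d2); first by rewrite lt_min d10 d20.
  move=> y Ay bxy; rewrite ?xc ?lexx.
  case: (lerP (key y) c) => yc.
    apply: hd1; first exact: (conj Ay yc).
    by apply: le_ball bxy; rewrite ge_min lexx.
  rewrite (fg x Ax xc); apply: hd2; first exact: (conj Ay (ltW yc)).
  by apply: le_ball bxy; rewrite ge_min lexx orbT.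
Qed.

Lemma cont_pair (X Y Z : topologicalType) (g : X -> Y) (h : X -> Z) :
  continuous g -> continuous h -> continuous (fun x => (g x, h x)).
Proof. move=> cg ch x. exact: (cvg_pair (cg x) (ch x)). Qed.

Lemma cont_fst (X : topologicalType) (g : X -> R * R) :
  continuous g -> continuous (fun x => (g x).1).
Proof. move=> cg x. apply: cvg_comp (cg x) _. exact: cvg_fst. Qed.

Lemma cont_snd (X : topologicalType) (g : X -> R * R) :
  continuous g -> continuous (fun x => (g x).2).
Proof. move=> cg x. apply: cvg_comp (cg x) _. exact: cvg_snd. Qed.

Lemma cont_lerp (X : topologicalType) (s : X -> R) (a b : X -> R * R) :
  continuous s -> continuous a -> continuous b ->
  continuous (fun x => lerp (s x) (a x) (b x)).
Proof.
move=> cs ca cb; rewrite /lerp; apply: cont_pair.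
- move=> x; apply: cvgD; apply: cvgM.
  + by apply: cvgB; [exact: cvg_cst | exact: cs].
  + exact: cont_fst.
  + exact: cs.
  + exact: cont_fst.
- move=> x; apply: cvgD; apply: cvgM.
  + by apply: cvgB; [exact: cvg_cst | exact: cs].
  + exact: cont_snd.
  + exact: cs.
  + exact: cont_snd.
Qed.


Lemma lerp0 (a b : R * R) : lerp 0 a b = a.
Proof. by rewrite /lerp !mul0r !subr0 !mul1r !addr0; case: a. Qed.

Lemma lerp1 (a b : R * R) : lerp 1 a b = b.
Proof. by rewrite /lerp !mul1r !subrr !mul0r !add0r; case: b. Qed.

Lemma lerpC s (a b : R * R) : lerp s a b = lerp (1 - s) b a.
Proof. rewrite /lerp; congr pair; ring. Qed.

Lemma lerp_odisk s (a b : R * R) : odisk a -> odisk b -> 0 <= s <= 1 ->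
  odisk (lerp s a b).
Proof.
rewrite /odisk /sqn /lerp /= => ha hb /andP[s0 s1].
have h1 : ((1 - s) * a.1 + s * b.1) ^+ 2 <= (1 - s) * a.1 ^+ 2 + s * b.1 ^+ 2.
  have : 0 <= s * (1 - s) * (a.1 - b.1) ^+ 2.
    by apply: mulr_ge0; [apply: mulr_ge0; lra | exact: sqr_ge0].
  move=> h; rewrite -subr_ge0; apply: le_trans h _; rewrite le_eqVlt; apply/orP; left; apply/eqP; ring.
have h2 : ((1 - s) * a.2 + s * b.2) ^+ 2 <= (1 - s) * a.2 ^+ 2 + s * b.2 ^+ 2.
  have : 0 <= s * (1 - s) * (a.2 - b.2) ^+ 2.
    by apply: mulr_ge0; [apply: mulr_ge0; lra | exact: sqr_ge0].
  move=> h; rewrite -subr_ge0; apply: le_trans h _; rewrite le_eqVlt; apply/orP; left; apply/eqP; ring.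
have h3 : (1 - s) * (a.1 ^+ 2 + a.2 ^+ 2) + s * (b.1 ^+ 2 + b.2 ^+ 2) < 1.
  set A := a.1 ^+ 2 + a.2 ^+ 2 in ha *; set B := b.1 ^+ 2 + b.2 ^+ 2 in hb *.
  case: (ltrP 0 s) => sp.
    have p1 : 0 < s * (1 - B) by apply: mulr_gt0; lra.
    have p2 : 0 <= (1 - s) * (1 - A) by apply: mulr_ge0; lra.
    nra.
  have -> : s = 0 by lra.
  lra.
nra.
Qed.

Lemma qpt_odisk n (i : 'I_n) : odisk (@qpt R n i).
Proof.
rewrite /odisk /sqn /qpt /=.
set x := (i.+1)%:R / (n.+1)%:R : R.
have hx : 2 * (i.+1)%:R / (n.+1)%:R = 2 * x :> R by rewrite /x mulrA.
rewrite hx.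
have x0 : 0 < x by rewrite /x divr_gt0 // ltr0n.
have x1 : x < 1.
  rewrite /x ltr_pdivrMr ?ltr0n // mul1r ltr_nat ltnS; exact: ltn_ord.
rewrite expr0n addr0. nra.
Qed.

Lemma homeo_inj (g : R * R -> R * R) : homeoD g -> injective g.
Proof. by case=> _ [h [_ gh _]] _; exact: can_inj gh. Qed.

Lemma homeo_odisk (g : R * R -> R * R) x : homeoD g -> odisk x -> odisk (g x).
Proof.
move=> hg; have gi := @homeo_inj g hg; case: hg => _ _ [r [/andP[r0 r1] hr]] ox.
apply/negP => /negP; rewrite /odisk /= -leNgt => h.
have e : g (g x) = g x by apply: hr; move: h; rewrite /sqn; lra.
have := gi _ _ e => e'; move: ox; rewrite /odisk /= -e'; lra.
Qed.

End Tools.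
Section Strand.
Variable R : realType.

Definition sq01 : set (R * R) := [set st | I01 st.1 /\ I01 st.2].

Lemma hk_snd (x y : R * R) d : ball x d y -> `|x.2 - y.2| < d.
Proof. by case=> _ h; move: h; rewrite -ball_normE. Qed.

Lemma hk_id (x y : R) d : ball x d y -> `|x - y| < d.
Proof. by rewrite -ball_normE. Qed.

Lemma hk_fst (x y : R * R) d : ball x d y -> `|x.1 - y.1| < d.
Proof. by case=> h _; move: h; rewrite -ball_normE. Qed.

Lemma c13 : 3 * (1 / 3) = 1 :> R. Proof. lra. Qed.
Lemma c23 : 3 * (2 / 3) - 1 = 1 :> R. Proof. lra. Qed.
Lemma c23' : 3 * (2 / 3) - 2 = 0 :> R. Proof. lra. Qed.
Lemma c13' : 3 * (1 / 3) - 1 = 0 :> R. Proof. lra. Qed.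

Lemma strand_cont2 n (f : R * R -> R * R) Phi (P P' : 'I_n -> R * R) i :
  homeoD f -> isotopy Phi f ->
  (forall s, I01 s -> cdisk (lerp s (P i) (P' i))) ->
  edc sq01 (fun st : R * R =>
     beta_strand (fun j => lerp st.1 (P j) (P' j)) f Phi i st.2).
Proof.
move=> hf [hP hP0 hP1 hPc] hc.
pose L := fun st : R * R => lerp st.1 (P i) (P' i).
have cL : continuous L.
  apply: cont_lerp => x; [exact: cvg_fst | exact: cvg_cst | exact: cvg_cst].
pose p1 := fun st : R * R => lerp (3 * st.2) (qpt R i) (L st).
pose p2 := fun st : R * R => Phi (3 * st.2 - 1) (L st).
pose p3 := fun st : R * R => lerp (3 * st.2 - 2) (f (L st)) (qpt R i).
have -> : (fun st : R * R =>
     beta_strand (fun j => lerp st.1 (P j) (P' j)) f Phi i st.2) =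
   (fun st => if st.2 <= 1/3 then p1 st else
       (fun st => if st.2 <= 2/3 then p2 st else p3 st) st) by [].
apply: (edc_glue (key := snd)); first exact: hk_snd.
- apply: edcT; apply: cont_lerp => //.
  + by move=> x; apply: cvgM; [exact: cvg_cst | exact: cvg_snd].
  + by move=> x; exact: cvg_cst.
- apply: (edc_glue (key := snd)); first exact: hk_snd.
  + have := @edc_comp _ _ _ _ _ [set tx : R * (R * R) | I01 tx.1 /\ cdisk tx.2]
      (fun st : R * R => (3 * st.2 - 1, L st)) (fun tx : R * (R * R) => Phi tx.1 tx.2).
    move=> h; apply: h.
    * have cu : continuous (fun st : R * R => (3 * st.2 - 1, L st)).
        apply: cont_pair => //.
        by move=> x; apply: cvgB; [apply: cvgM; [exact: cvg_cst | exact: cvg_snd] | exact: cvg_cst].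
      exact: edcT cu.
    * move=> x [[[hx1 /andP[x0 x1]] x13] x23]; split => /=.
        by apply/andP; move: x13 x23 => /= x13 x23; split; lra.
      exact: hc hx1.
    * by apply/edcP.
  + apply: edcT; apply: cont_lerp => //.
    * by move=> x; apply: cvgB; [apply: cvgM; [exact: cvg_cst | exact: cvg_snd] | exact: cvg_cst].
    * case: hf => cf _ _ x; apply: cvg_comp (cL x) _; exact: cf.
    * by move=> x; exact: cvg_cst.
  + move=> x _ /= e; rewrite /p2 /p3 e c23 c23' hP1 lerp0 //.
- move=> x _ /= e; rewrite /p1 /p2 e c13' c13 lerp1 hP0 ifT //; lra.
Qed.

End Strand.
Section GB.
Variable R : realType.

Lemma odisk_cdisk (x : R * R) : odisk x -> cdisk x.
Proof. by rewrite /odisk /cdisk /= => h; apply: ltW. Qed.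

Lemma edc_ext {T U : pseudoMetricType R} (A : set T) (f g : T -> U) :
  (forall x, A x -> f x = g x) -> edc A f -> edc A g.
Proof.
move=> fg h x Ax e e0; have [d d0 hd] := h x Ax e e0.
by exists d => // y Ay bxy; rewrite -!fg //; apply: hd.
Qed.

Lemma strand_cont1 n (f : R * R -> R * R) Phi (P : 'I_n -> R * R) i :
  homeoD f -> isotopy Phi f -> odisk (P i) ->
  {within @I01 R, continuous (beta_strand P f Phi i)}.
Proof.
move=> hf hPhi oP; apply/edcP.
have h2 := strand_cont2 hf hPhi (P := P) (P' := P) (i := i)
   (fun s hs => odisk_cdisk (lerp_odisk oP oP hs)).
have := edc_comp (A := @I01 R) (u := fun t : R => (0 : R, t)) _ _ h2.
move=> h; apply: (edc_ext _ (h _ _)).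
- move=> t _ /=; have -> : (fun j => lerp 0 (P j) (P j)) = P by apply: funext => j; rewrite lerp0.
  by [].
- apply: edcT; apply: cont_pair => x; [exact: cvg_cst | exact: cvg_id].
- move=> t ht; split => //=; rewrite /I01 /= lexx ler01 //.
Qed.

Lemma GB n (f : R * R -> R * R) Phi (P : 'I_n -> R * R) :
  homeoD f -> isotopy Phi f -> beta_dom f P ->
  geom_braid (beta_strand P f Phi).
Proof.
move=> hf hPhi [oP dP [_ OP] [_ OfP]].
have hPhi' := hPhi; case: hPhi' => hP hP0 hP1 _.
split.
- move=> i; exact: strand_cont1.
- move=> i t /andP[t0 t1]; rewrite /beta_strand.
  case: ifP => t13.
    by apply: lerp_odisk => //; [exact: qpt_odisk | apply/andP; split; lra].
  case: ifP => t23.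
    apply: homeo_odisk => //; apply: hP; apply/andP; split; lra.
  apply: lerp_odisk; [exact: homeo_odisk | exact: qpt_odisk | ].
  apply/andP; split; lra.
- move=> i j t /andP[t0 t1] ij; rewrite /beta_strand.
  case: ifP => t13.
    by apply: OP => //; apply/andP; split; lra.
  case: ifP => t23.
    have h : I01 (3 * t - 1) by apply/andP; split; lra.
    move=> e; exact: (dP _ _ ij (homeo_inj (hP _ h) e)).
  rewrite lerpC [X in _ <> X]lerpC; apply: (OfP i j) => //.
  apply/andP; split; lra.
- move=> i; rewrite /beta_strand mulr0 ifT ?lerp0 //; lra.
- move=> i; exists i; rewrite /beta_strand ifF; last by apply/negbTE; rewrite -ltNge; lra.
  rewrite ifF; last by apply/negbTE; rewrite -ltNge; lra.
  have -> : 3 * 1 - 2 = 1 :> R by lra.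
  by rewrite lerp1.
Qed.

End GB.
Section Move.
Variable R : realType.

Lemma equiv_move n (f : R * R -> R * R) Phi (P P' : 'I_n -> R * R) b :
  homeoD f -> isotopy Phi f ->
  (forall s, I01 s -> beta_dom f (fun j => lerp s (P j) (P' j))) ->
  braid_equiv (beta_strand P f Phi) b ->
  braid_equiv (beta_strand P' f Phi) b.
Proof.
move=> hf hPhi hdom [H0 [hg h0 h1 hc]].
pose K := fun s : R => beta_strand (fun j => lerp s (P j) (P' j)) f Phi.
have K0 : K 0 = beta_strand P f Phi.
  by rewrite /K; congr beta_strand; apply: funext => j; rewrite lerp0.
have K1 : K 1 = beta_strand P' f Phi.
  by rewrite /K; congr beta_strand; apply: funext => j; rewrite lerp1.
exists (fun s => if s <= 1/2 then K (1 - 2 * s) else H0 (2 * s - 1)); split.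
- move=> s /andP[s0 s1]; case: ifP => hs.
    apply: GB => //; apply: hdom; apply/andP; split; lra.
  apply: hg; move: hs => /negbT; rewrite -ltNge => hs; apply/andP; split; lra.
- move=> i t ht; rewrite ifT; last by lra.
  by rewrite mulr0 subr0 K1.
- move=> i t ht; rewrite ifF; last by apply/negbTE; rewrite -ltNge; lra.
  have -> : 2 * 1 - 1 = 1 :> R by lra.
  exact: h1.
- move=> i; apply/edcP.
  have hc1 : forall s, I01 s -> cdisk (lerp s (P i) (P' i)).
    by move=> s hs; case: (hdom s hs) => oP _ _ _; exact: odisk_cdisk (oP i).
  apply: (edc_ext (f := fun st : R * R => if st.1 <= 1/2
      then K (1 - 2 * st.1) i st.2 else H0 (2 * st.1 - 1) i st.2)).
    by move=> x _ /=; case: ifP.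
  apply: (edc_glue (key := fst)); first exact: hk_fst.
  + have := edc_comp (A := @sq01 R `&` [set x | x.1 <= 1/2])
      (u := fun st : R * R => (1 - 2 * st.1, st.2)) _ _
      (strand_cont2 hf hPhi hc1).
    apply.
    * apply: edcT; apply: cont_pair => x.
        by apply: cvgB; [exact: cvg_cst | apply: cvgM; [exact: cvg_cst | exact: cvg_fst]].
      exact: cvg_snd.
    * move=> x [[/andP[x0 x1] hx2] hx]; rewrite /sq01 /=; split => //; apply/andP; move: hx => /= hx; split; lra.
  + have := edc_comp (A := @sq01 R `&` [set x | 1/2 <= x.1])
      (u := fun st : R * R => (2 * st.1 - 1, st.2)) (B := @sq01 R) _ _
      (F := fun st : R * R => H0 st.1 i st.2) _.
    apply.
    * apply: edcT; apply: cont_pair => x.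
        by apply: cvgB; [apply: cvgM; [exact: cvg_cst | exact: cvg_fst] | exact: cvg_cst].
      exact: cvg_snd.
    * move=> x [[/andP[x0 x1] hx2] hx]; rewrite /sq01 /=; split => //; apply/andP; move: hx => /= hx; split; lra.
    * by apply/edcP; apply: hc.
  + move=> x [_ hx2] /= e; rewrite e.
    have -> : 1 - 2 * (1 / 2) = 0 :> R by lra.
    have -> : 2 * (1 / 2) - 1 = 0 :> R by lra.
    by rewrite K0 h0.
Qed.

End Move.
Section Open.
Variable R : realType.

Definition near2 (p p' : R * R) d := `|p.1 - p'.1| < d /\ `|p.2 - p'.2| < d.
Definition closeP n (P P' : 'I_n -> R * R) d := forall i, near2 (P i) (P' i) d.

Lemma ball_near2 (x y : R * R) d : ball x d y <-> near2 x y d.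
Proof. by rewrite /near2; split; case=> h1 h2; split; move: h1 h2; rewrite -!ball_normE. Qed.

Lemma near2W (x y : R * R) d d' : d <= d' -> near2 x y d -> near2 x y d'.
Proof. by move=> dd [h1 h2]; split; apply: lt_le_trans dd. Qed.

Lemma fin_min (I : finType) (Q : I -> R -> Prop) :
  (forall i e e', 0 < e' <= e -> Q i e -> Q i e') ->
  (forall i, exists2 e, 0 < e & Q i e) -> exists2 e, 0 < e & forall i, Q i e.
Proof.
move=> mono h.
suff : forall s : seq I, exists2 e, 0 < e & forall i, i \in s -> Q i e.
  by case/(_ (enum I)) => e e0 he; exists e => // i; apply: he; rewrite mem_enum.
elim=> [|a s [e e0 he]]; first by exists 1.
have [ea ea0 hea] := h a.
exists (Num.min ea e); first by rewrite lt_min ea0 e0.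
move=> i; rewrite in_cons => /orP[/eqP ->|iis].
  by apply: mono hea; rewrite lt_min ea0 e0 /= ge_min lexx.
by apply: mono (he i iis); rewrite lt_min ea0 e0 /= ge_min lexx orbT.
Qed.

Definition noncoll n (Q : 'I_n -> R * R) :=
  forall i j s, i <> j -> I01 s -> lerp s (qpt R i) (Q i) <> lerp s (qpt R j) (Q j).

Lemma aux (s a b x y x' y' : R) : (1-s)*a + s*x' = (1-s)*b + s*y' ->
  (1-s)*a + s*x - ((1-s)*b + s*y) = s*(x - x') - s*(y - y').
Proof.
move=> e; have h : (1-s)*a + s*x' - ((1-s)*b + s*y') = 0 by rewrite e subrr.
rewrite -[LHS]subr0 -h; ring.
Qed.

Lemma NC n (Q : 'I_n -> R * R) : noncoll Q ->
  exists2 eta, 0 < eta & forall Q', closeP Q Q' eta -> noncoll Q'.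
Proof.
move=> hQ.
pose Qf := (fun ij : 'I_n * 'I_n => fun e => forall Q' : 'I_n -> R * R,
   near2 (Q ij.1) (Q' ij.1) e -> near2 (Q ij.2) (Q' ij.2) e -> ij.1 <> ij.2 ->
   forall s, I01 s -> lerp s (qpt R ij.1) (Q' ij.1) <> lerp s (qpt R ij.2) (Q' ij.2)).
have mono : forall ij e e', 0 < e' <= e -> Qf ij e -> Qf ij e'.
  move=> [i j] e e' /andP[e'0 e'e] /= h Q' h1 h2; apply: h; [exact: near2W e'e h1 | exact: near2W e'e h2].
suff ex : forall ij, exists2 e, 0 < e & Qf ij e.
  have [e e0 he] := fin_min mono ex.
  by exists e => // Q' cQ i j s ij hs; apply: (he (i, j)) => //; apply: cQ.
- move=> [i j] /=.
  case: (eqVneq i j) => [->|ij]; first by exists 1 => // Q' _ _ [].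
  pose L1 := fun s => lerp s (qpt R i) (Q i).
  pose L2 := fun s => lerp s (qpt R j) (Q j).
  pose g := fun s => ((L1 s).1 - (L2 s).1) * ((L1 s).1 - (L2 s).1)
                   + ((L1 s).2 - (L2 s).2) * ((L1 s).2 - (L2 s).2).
  have cL1 : continuous L1 by apply: cont_lerp => x; [exact: cvg_id | exact: cvg_cst | exact: cvg_cst].
  have cL2 : continuous L2 by apply: cont_lerp => x; [exact: cvg_id | exact: cvg_cst | exact: cvg_cst].
  have cg : continuous g.
    move=> x; apply: cvgD; apply: cvgM; apply: cvgB;
      solve [exact: (cont_fst cL1) | exact: (cont_fst cL2) | exact: (cont_snd cL1) | exact: (cont_snd cL2)].
  have [c hc hmin] := @EVT_min R g 0 1 ler01 (continuous_subspaceT cg).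
  have Ic : I01 c by move: hc; rewrite in_itv.
  have gc0 : 0 < g c.
    rewrite /g; set u := _ - _; set v := _ - _.
    have [u0|u0] := eqVneq u 0.
      have [v0|v0] := eqVneq v 0.
        have ij' : i <> j by apply/eqP.
        exfalso; apply: (hQ i j c ij' Ic).
        move/eqP: u0; move/eqP: v0; rewrite /u /v !subr_eq0 => /eqP e2 /eqP e1.
        by apply: injective_projections.
      by rewrite u0 mul0r add0r lt0r mulf_neq0 //= -expr2 sqr_ge0.
    by apply: ltr_wpDr; [rewrite -expr2 sqr_ge0 | rewrite lt0r mulf_neq0 //= -expr2 sqr_ge0].
  exists (Num.min 1 (g c / 16)); first by rewrite lt_min ltr01 /= divr_gt0.
  set eta := Num.min 1 (g c / 16).
  have eta0 : 0 < eta by rewrite lt_min ltr01 /= divr_gt0.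
  have eta1 : eta <= 1 by rewrite ge_min lexx.
  have eta2 : eta <= g c / 16 by rewrite ge_min lexx orbT.
  move=> Q' [hi1 hi2] [hj1 hj2] _ s hs heq.
  have sI : s \in `[0, 1] by rewrite in_itv.
  have gs := hmin s sI.
  move: hs => /andP[s0 s1].
  move: heq; rewrite /lerp => -[e1 e2].
  move: hi1 hi2 hj1 hj2; rewrite /= !ltr_norml => /andP[a1 a2] /andP[b1 b2] /andP[c1 c2] /andP[d1 d2].
  have eD1 : (L1 s).1 - (L2 s).1 = s * ((Q i).1 - (Q' i).1) - s * ((Q j).1 - (Q' j).1).
    rewrite /L1 /L2 /lerp /=; exact: aux e1.
  have eD2 : (L1 s).2 - (L2 s).2 = s * ((Q i).2 - (Q' i).2) - s * ((Q j).2 - (Q' j).2).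
    rewrite /L1 /L2 /lerp /=; exact: aux e2.
  have gsE : g s = (s * ((Q i).1 - (Q' i).1) - s * ((Q j).1 - (Q' j).1)) * (s * ((Q i).1 - (Q' i).1) - s * ((Q j).1 - (Q' j).1)) + (s * ((Q i).2 - (Q' i).2) - s * ((Q j).2 - (Q' j).2)) * (s * ((Q i).2 - (Q' i).2) - s * ((Q j).2 - (Q' j).2)).
    by rewrite /g eD1 eD2.
  move: gs; rewrite gsE.
  set D1 := s * _ - _; set D2 := s * _ - _.
  have hD1 : D1 * D1 < 4 * (eta * eta).
    have : -(2 * eta) < D1 < 2 * eta.
      rewrite /D1; apply/andP; split; nra.
    move=> /andP[l1 l2]; nra.
  have hD2 : D2 * D2 < 4 * (eta * eta).
    have : -(2 * eta) < D2 < 2 * eta.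
      rewrite /D2; apply/andP; split; nra.
    move=> /andP[l1 l2]; nra.
  have : eta * eta <= eta by nra.
  move: eta2; set G := g c => eta2 h3 h4.
  move: hD1 hD2 h3 h4; set E := eta * eta; set X1 := D1 * D1; set X2 := D2 * D2.
  lra.
Qed.

End Open.
Section LC.
Variable R : realType.

Lemma sqn_cont : continuous (@sqn R).
Proof.
have -> : @sqn R = fun x => x.1 * x.1 + x.2 * x.2.
  by apply: funext => x; rewrite /sqn !expr2.
move=> x; apply: cvgD; apply: cvgM; solve [exact: cvg_fst | exact: cvg_snd].
Qed.

Lemma Eopen n (f : R * R -> R * R) (P : 'I_n -> R * R) : homeoD f -> beta_dom f P ->
  exists2 d, 0 < d & forall P', closeP P P' d -> beta_dom f P'.
Proof.
move=> hf [oP dP [cP ncP] [cfP ncfP]].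
have [e1 e10 he1] := NC ncP.
have [e2 e20 he2] := NC (Q := f \o P) ncfP.
have cf : continuous f by case: hf.
pose Qi := fun i d => forall y, near2 (P i) y d -> odisk y /\ near2 (f (P i)) (f y) e2.
have mono : forall i e e', 0 < e' <= e -> Qi i e -> Qi i e'.
  by move=> i e e' /andP[_ ee] h y hy; apply: h; exact: near2W ee hy.
have ex : forall i, exists2 d, 0 < d & Qi i d.
  move=> i.
  have [d1 d10 hd1] := edcT (A := setT) cf (x := P i) I e20.
  have pos : 0 < 1 - sqn (P i) by move: (oP i); rewrite /odisk /=; lra.
  have [d2 d20 hd2] := edcT (A := setT) sqn_cont (x := P i) I pos.
  exists (Num.min d1 d2); first by rewrite lt_min d10 d20.
  move=> y hy; split.
    have : ball (sqn (P i)) (1 - sqn (P i)) (sqn y).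
      apply: hd2 => //; apply/ball_near2; apply: near2W hy; rewrite ge_min lexx orbT //.
    rewrite -ball_normE /= ltr_norml /odisk /= => /andP[h1 h2]; lra.
  apply/ball_near2; apply: hd1 => //; apply/ball_near2; apply: near2W hy.
  by rewrite ge_min lexx.
have [d3 d30 hd3] := fin_min mono ex.
exists (Num.min e1 d3); first by rewrite lt_min e10 d30.
move=> P' cP'.
have c1 : closeP P P' e1 by move=> i; apply: near2W (cP' i); rewrite ge_min lexx.
have c3 : closeP P P' d3 by move=> i; apply: near2W (cP' i); rewrite ge_min lexx orbT.
have oP' : forall i, odisk (P' i) by move=> i; exact: (hd3 i _ (c3 i)).1.
have ncP' := he1 P' c1.
have ncfP' := he2 (f \o P') (fun i => (hd3 i _ (c3 i)).2).
split => //.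
- move=> i j ij e; apply: (ncP' i j 1 ij); first by rewrite /I01 /= lexx ler01.
  by rewrite !lerp1 e.
- by split => // i; apply: odisk_cdisk.
- by split => // i; apply: odisk_cdisk; apply: homeo_odisk.
Qed.

Lemma close_lerp n (P P' : 'I_n -> R * R) d s : closeP P P' d -> I01 s ->
  closeP P (fun j => lerp s (P j) (P' j)) d.
Proof.
move=> c /andP[s0 s1] i; have [h1 h2] := c i; rewrite /lerp /near2 /=.
have e : forall a b : R, a - ((1 - s) * a + s * b) = s * (a - b) by move=> a b; ring.
rewrite !e !normrM (ger0_norm s0).
move: h1 h2; set x := `|_|; set y := `|_|.
have x0 : 0 <= x by apply: normr_ge0.
have y0 : 0 <= y by apply: normr_ge0.
move=> h1 h2; split; nra.
Qed.

Lemma LC n (f : R * R -> R * R) (S : set (braidT R n)) P : homeoD f ->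
  (beta_dom f P /\ exists2 b, S b & in_beta P f b) ->
  exists2 d, 0 < d & forall P', closeP P P' d ->
     (beta_dom f P' /\ exists2 b, S b & in_beta P' f b).
Proof.
move=> hf [hP [b Sb [Phi [iso eq]]]].
have [d d0 hd] := Eopen hf hP.
exists d => // P' c; split; first exact: hd.
exists b => //; exists Phi; split => //.
apply: (equiv_move hf iso _ eq) => s hs; apply: hd; exact: close_lerp.
Qed.

End LC.
Lemma ball_norm (R : realType) (a b r : R) : ball a r b <-> `|a - b| < r.
Proof. by rewrite -ball_normE. Qed.

Theorem lemma2 (R : realType) (n : nat) (hn : (0 < n)%N) (phi : pt R -> pt R)
    (lam : 'I_n -> probability (pt R) R)
    (mu : {measure set (ptsn R n) -> \bar R}) :
  homeoD phi ->
  (forall i, lam i (@cdisk R) = 1%E) ->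
  (forall i (A : set (pt R)), measurable A -> lam i (phi @^-1` A) = lam i A) ->
  is_prod_measure lam mu ->
  coherent mu ->
  forall S : set (braidT R n),
    cmeasurable mu
      [set P : ptsn R n | beta_dom phi P /\ exists2 b, S b & in_beta P phi b].
Proof.
move=> hphi _ _ _ _ S.
set F := [set P : ptsn R n | _].
exists F; split; last by rewrite setDv setU0; exact: negligible_set0.
pose Ix := ({ffun 'I_n -> rat * rat} * rat)%type.
pose box := fun k : Ix => [set P : ptsn R n | forall i,
   (ball (ratr (k.1 i).1 : R) (ratr k.2) `*` ball (ratr (k.1 i).2 : R) (ratr k.2)) (P i)].
pose G := fun k => if pselect (box k `<=` F) then box k else set0.
have -> : F = \bigcup_k G k.
  apply/seteqP; split; last first.
    by move=> P [k _]; rewrite /G; case: pselect => h; [apply: h | case].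
  move=> P FP.
  have [d d0 hd] := LC hphi FP.
  have [r hr] := @rat_in_itvoo R 0 (d / 2) ltac:(by rewrite divr_gt0).
  move: hr; rewrite in_itv /= => /andP[r0 r2].
  have ex : forall i : 'I_n, exists q : rat * rat,
      `|ratr q.1 - (P i).1| < ratr r /\ `|ratr q.2 - (P i).2| < ratr r.
    move=> i.
    have [q1 hq1] := @rat_in_itvoo R ((P i).1 - ratr r) ((P i).1 + ratr r) ltac:(lra).
    have [q2 hq2] := @rat_in_itvoo R ((P i).2 - ratr r) ((P i).2 + ratr r) ltac:(lra).
    exists (q1, q2); move: hq1 hq2; rewrite !in_itv /= !ltr_norml => /andP[a1 a2] /andP[b1 b2].
    by split; apply/andP; split; lra.
  have [g hg] := choice ex.
  exists ([ffun i => g i], r) => //.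
  have boxP : box ([ffun i => g i], r) P.
    move=> i /=; rewrite ffunE; have [h1 h2] := hg i.
    by split; apply/ball_norm.
  rewrite /G; case: pselect => // hsub; exfalso; apply: hsub => Q hQ.
  apply: hd => i; have [h1 h2] := hg i; have [k1 k2] := hQ i.
  move/ball_norm: k1 => k1; move/ball_norm: k2 => k2; rewrite ffunE /= in k1 k2.
  move: h1 h2 k1 k2; rewrite /near2 !ltr_norml => /andP[a1 a2] /andP[b1 b2] /andP[c1 c2] /andP[e1 e2].
  by split; apply/andP; split; lra.
apply: countable_bigcupT_measurable; first exact: countableP.
move=> k; rewrite /G; case: pselect => hk; last exact: measurable0.
apply: sub_gen_smallest.
exists (fun i => ball (ratr (k.1 i).1 : R) (ratr k.2) `*` ball (ratr (k.1 i).2 : R) (ratr k.2)).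
split => // i; apply: measurableX; exact: measurable_ball.
Qed.
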